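(* Let $K$ be a field of characteristic $0$, $e\ge 2$, $A,B,C\in M_e(K)$ and $d_1,d_2\in(\mathbb{Z}/e\mathbb{Z})^\times$. Then \[ A\overset{d_1}{\ast}(B\overset{d_2}{\ast}C)=(A\overset{-d_2^{-1}d_1}{\ast}B)\overset{d_2}{\ast}C. \] In particular $A\overset{d_1}{\ast}(B\overset{-1}{\ast}C)=(A\overset{d_1}{\ast}B)\overset{-1}{\ast}C$, and hence the $(-1)$-composition $\overset{-1}{\ast}$ is associative.
   Context: For $A=[a_{i,j}],B=[b_{i,j}]\in M_e(K)$ (indices modulo $e$) and $d\in(\mathbb{Z}/e\mathbb{Z})\setminus\{0\}$, the $d$-composition is $A\overset{d}{\ast}B=\big[\sum_{s=0}^{e-1}\sum_{t=0}^{e-1}a_{s,t}b_{ds+i,dt+j}\big]_{0\le i,j\le e-1}$. *)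

(* Defs.v *)
From HB Require Import structures.
From mathcomp Require Import all_boot all_order all_algebra.
Set Implicit Arguments. Unset Strict Implicit. Unset Printing Implicit Defensive.
Import GRing.Theory.
Local Open Scope ring_scope.

(* For i : 'I_e and a natural k, [idx i k] is the ordinal (k %% e) : 'I_e
   (the default i is never used since k %% e < e as e > 0 whenever 'I_e
   is inhabited). *)
Definition idx (e : nat) (i : 'I_e) (k : nat) : 'I_e := insubd i (k %% e)%N.

(* d-composition: (A *_d B)_{i,j} = sum_{s,t} a_{s,t} b_{ds+i, dt+j},
   indices modulo e; d is given by a natural representative. *)
Definition dcomp (K : pzRingType) (e : nat) (d : nat) (A B : 'M[K]_e) : 'M[K]_e :=
  \matrix_(i < e, j < e)
     \sum_(s < e) \sum_(t < e) A s t * B (idx i (d * s + i)) (idx j (d * t + j)).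

(* Main.v *)
Require Import Defs.
From HB Require Import structures.
From mathcomp Require Import all_boot all_order all_algebra zify.
Import GRing.Theory.
Local Open Scope ring_scope.

Lemma idx_val e (i : 'I_e) k : val (idx i k) = (k %% e)%N.
Proof. rewrite /idx val_insubd ltn_mod (leq_ltn_trans _ (ltn_ord i)) //. Qed.

Lemma idx_eq e (i i' : 'I_e) k1 k2 : (k1 = k2 %[mod e])%N -> idx i k1 = idx i' k2.
Proof. by move=> h; apply: val_inj; rewrite !idx_val. Qed.

Lemma idx_inj e d s : injective (fun u : 'I_e => idx u (d * s + u)).
Proof.
move=> u v /(congr1 val); rewrite !idx_val => /eqP; rewrite eqn_modDl => /eqP.
by rewrite !modn_small // => /val_inj.
Qed.

Lemma swap4 (K : pzRingType) e (F : 'I_e -> 'I_e -> 'I_e -> 'I_e -> K) :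
  \sum_(u < e) \sum_(v < e) \sum_(s < e) \sum_(t < e) F u v s t =
  \sum_(s < e) \sum_(t < e) \sum_(u < e) \sum_(v < e) F u v s t.
Proof.
under eq_bigr do rewrite exchange_big.
rewrite exchange_big.
under eq_bigr do under eq_bigr do rewrite exchange_big.
by under eq_bigr do rewrite exchange_big.
Qed.

Lemma key e (d1 d2 d s u i : nat) (h : ((d2 * d + d1) %% e = 0)%N) :
  (d2 * ((d * s + u) %% e) + (d1 * s + i) %% e = d2 * u + i %[mod e])%N.
Proof.
rewrite modnDmr -modnDml modnMmr modnDml.
have -> : (d2 * (d * s + u) + (d1 * s + i) = (d2 * d + d1) * s + (d2 * u + i))%N by rewrite !mulnDr !mulnDl !mulnA; lia.
by rewrite -modnDml -[(((d2 * d + d1) * s) %% e)%N]modnMml h mul0n mod0n add0n.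
Qed.

Lemma core (K : pzRingType) e (d1 d2 d : nat) (h : ((d2 * d + d1) %% e = 0)%N)
  (A B C : 'M[K]_e) :
  dcomp d1 A (dcomp d2 B C) = dcomp d2 (dcomp d A B) C.
Proof.
apply/matrixP => i j; rewrite !mxE.
under eq_bigr do under eq_bigr do rewrite mxE big_distrr /=.
under [RHS]eq_bigr do under eq_bigr do rewrite mxE big_distrl /=.
under [RHS]eq_bigr do under eq_bigr do under eq_bigr do rewrite big_distrl /=.
rewrite swap4; apply: eq_bigr => s _; apply: eq_bigr => t _.
rewrite (reindex_inj (@idx_inj e d s)).
apply: eq_bigr => u _; rewrite mulr_sumr.
rewrite (reindex_inj (@idx_inj e d t)).
apply: eq_bigr => v _.
rewrite -mulrA; congr (_ * (_ * _)).
by congr (C _ _); apply: idx_eq; rewrite !idx_val key.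
Qed.

Lemma gen (K : fieldType) e' (A B C : 'M[K]_(e'.+2)) (d1 d2 : 'Z_(e'.+2))
  (hd2 : d2 \is a GRing.unit) :
  dcomp d1 A (dcomp d2 B C) = dcomp d2 (dcomp ((- (d2^-1 * d1))%R : 'Z_(e'.+2)) A B) C.
Proof.
apply: core.
set z := (- (d2^-1 * d1))%R.
have E : (d2 * z + d1 = 0 :> 'Z_(e'.+2))%R by rewrite /z mulrN mulrA mulrV // mul1r addNr.
rewrite -modnDml; exact: (congr1 val E).
Qed.

Theorem proposition3p4 (K : fieldType) (e : nat) (he : (2 <= e)%N)
  (hchar : [pchar K] =i pred0)
  (A B C : 'M[K]_e) (d1 d2 : 'Z_e)
  (hd1 : d1 \is a GRing.unit) (hd2 : d2 \is a GRing.unit) :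
  [/\ dcomp d1 A (dcomp d2 B C) = dcomp d2 (dcomp ((- (d2^-1 * d1))%R : 'Z_e) A B) C,
      dcomp d1 A (dcomp ((-1)%R : 'Z_e) B C) = dcomp ((-1)%R : 'Z_e) (dcomp d1 A B) C
    & forall X Y Z : 'M[K]_e,
        dcomp ((-1)%R : 'Z_e) X (dcomp ((-1)%R : 'Z_e) Y Z)
        = dcomp ((-1)%R : 'Z_e) (dcomp ((-1)%R : 'Z_e) X Y) Z].
Proof.
case: e he A B C d1 d2 hd1 hd2 => [|[|e']] // _ A B C d1 d2 hd1 hd2.
have m1 : forall d : 'Z_(e'.+2), (- ((-1)^-1 * d))%R = d.
  by move=> d; rewrite invrN1 mulN1r opprK.
split; first exact: gen.
  by rewrite gen ?unitrN1 // m1.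
by move=> X Y Z; rewrite gen ?unitrN1 // m1.
Qed.
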